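(* (i) There exist a sequence of Pauli Hamiltonians $H^{(m)}=\sum_i c_i P_i$ with all coefficients satisfying $|c_i|=\Theta(1)$, indexed by $m\to\infty$, such that the grouping $\mathcal{G}^{(m)}_{\mathrm{SI}}$ produced by sorted insertion has $m$ groups, and an overlapped grouping $\mathcal{R}^{(m)}$ of $H^{(m)}$, such that $$\frac{\mathrm{Var}^*(\mathcal{G}^{(m)}_{\mathrm{SI}})}{\mathrm{Var}^*(\mathcal{R}^{(m)})}=\Theta(m),$$ where variances are computed in the state-independent, zero-covariance model described in the context (for the maximally mixed state). (ii) In this same model, this is asymptotically the largest possible reduction: for any (disjoint) grouping $\mathcal{G}$ with $m$ groups of a Hamiltonian $H$ and any overlapped grouping $\mathcal{R}$ of $H$, $\mathrm{Var}^*(\mathcal{G})/\mathrm{Var}^*(\mathcal{R})=O(m)$.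
   Context: A Pauli Hamiltonian on $n$ qubits is $H=\sum_{i=1}^N c_iP_i$ with real nonzero $c_i$ and distinct Pauli strings $P_i\in\{I,X,Y,Z\}^{\otimes n}$; $\mathrm{supp}(H)=\{P_1,\dots,P_N\}$. A grouping of $H$ is a list $\mathcal{G}=(G^{[1]},\dots,G^{[m]})$ of pairwise disjoint sets, each consisting of mutually commuting operators of $\mathrm{supp}(H)$, whose union is $\mathrm{supp}(H)$; an overlapped grouping is the same without the disjointness requirement. Sorted insertion: order the Pauli terms by decreasing $|c_i|$ and insert each term in turn into the first existing group all of whose members commute with it, creating a new group if there is none. Measurement model: a total budget of $M$ shots is split as positive shot counts $M_j$ with $\sum_j M_j=M$; group $G^{[j]}$ is measured $M_j$ times, each shot giving simultaneous $\pm1$ outcomes of all its operators; shots are independent. For $P_i$ let $\Gamma(i)=\{j:P_i\in G^{[j]}\}$; $\langle P_i\rangle$ is estimated by $\sum_{j\in\Gamma(i)}w_{i,j}\overline{\langle P_i\rangle}_{(j)}$ with $\sum_{j\in\Gamma(i)}w_{i,j}=1$, where $\overline{\langle P_i\rangle}_{(j)}$ is the sample mean over the shots of group $j$, and the energy estimator is $\overline{E}(w)=\sum_ic_i\overline{\langle P_i\rangle}(w)$. State-independent zero-covariance model: each Pauli has single-shot variance $1$ and all covariances between distinct Pauli operators are $0$ (as for the maximally mixed state). $\mathrm{Var}^*(\cdot)$ denotes the variance of $\overline{E}(w)$ in this model minimized over the weights $w$ and over the shot allocation $\{M_j\}$ with fixed total $M$; for a disjoint grouping this equals $(\sum_j\sqrt{S_j})^2/M$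 with $S_j=\sum_{i:P_i\in G^{[j]}}c_i^2$. *)

(* Defs.v *)
From HB Require Import structures.
From mathcomp Require Import all_boot all_order all_algebra.
From mathcomp Require Import boolp classical_sets reals.
Set Implicit Arguments. Unset Strict Implicit. Unset Printing Implicit Defensive.
Import Order.TTheory GRing.Theory Num.Theory.
Local Open Scope ring_scope.

(* A Pauli string on n qubits: each qubit carries 0 = I, 1 = X, 2 = Y, 3 = Z. *)
Definition pauli (n : nat) := 'I_n -> 'I_4.

Definition pcommute (n : nat) (p q : pauli n) : bool :=
  ~~ odd #|[set k : 'I_n | [&& (p k : nat) != 0%N, (q k : nat) != 0%N & p k != q k]]|.

(* A Pauli Hamiltonian H = sum_(i < N) c_i P_i : nonzero real coefficients and
   distinct Pauli strings.  supp(H) is identified with the index set 'I_N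
   (P is injective). *)
Definition is_pauli_hamiltonian (R : realType) (n N : nat)
    (c : 'I_N -> R) (P : 'I_N -> pauli n) : Prop :=
  (forall i, c i != 0) /\ injective P.

Definition commuting_set (n N : nat) (P : 'I_N -> pauli n) (A : {set 'I_N}) : bool :=
  [forall i in A, forall j in A, pcommute (P i) (P j)].

Definition overlapped_grouping (n N m : nat) (P : 'I_N -> pauli n)
    (G : 'I_m -> {set 'I_N}) : Prop :=
  (forall j, commuting_set P (G j)) /\ (forall i, exists j, i \in G j).

Definition grouping (n N m : nat) (P : 'I_N -> pauli n)
    (G : 'I_m -> {set 'I_N}) : Prop :=
  overlapped_grouping P G /\
  (forall j j', j != j' -> [disjoint G j & G j']).

(* Variance of the estimator E(w) in the state-independent zero-covariance
   model (each Pauli has single-shot variance 1, distinct Paulis have zero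
   covariance, shots independent), for shot counts Ms and weights w:
   Var = sum_i c_i^2 sum_(j in Gamma(i)) w_(i,j)^2 / M_j. *)
Definition model_variance (R : realType) (N m : nat) (c : 'I_N -> R)
    (G : 'I_m -> {set 'I_N}) (Ms : 'I_m -> R) (w : 'I_N -> 'I_m -> R) : R :=
  \sum_(i < N) c i ^+ 2 * \sum_(j < m | i \in G j) (w i j ^+ 2 / Ms j).

Definition admissible (R : realType) (N m : nat) (M : R)
    (G : 'I_m -> {set 'I_N}) (Ms : 'I_m -> R) (w : 'I_N -> 'I_m -> R) : Prop :=
  (forall j, 0 < Ms j) /\ \sum_(j < m) Ms j = M /\
  (forall i, \sum_(j < m | i \in G j) w i j = 1).

Definition var_opt (R : realType) (N m : nat) (M : R) (c : 'I_N -> R)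
    (G : 'I_m -> {set 'I_N}) : R :=
  inf [set v : R | exists (Ms : 'I_m -> R) (w : 'I_N -> 'I_m -> R),
         admissible M G Ms w /\ v = model_variance c G Ms w].

Fixpoint si_insert (T : Type) (comm : T -> T -> bool) (i : T)
    (gs : seq (seq T)) : seq (seq T) :=
  match gs with
  | [::] => [:: [:: i]]
  | g :: gs' => if all (comm i) g then rcons g i :: gs'
                else g :: si_insert comm i gs'
  end.

(* Terms ordered by decreasing |c_i| (stable sort: ties broken by index
   order), then inserted one by one into the first group all of whose members
   commute with it, or into a new group. *)
Definition sorted_insertion_seq (R : realType) (n N : nat) (c : 'I_N -> R)
    (P : 'I_N -> pauli n) : seq (seq 'I_N) :=
  foldl (fun gs i => si_insert (fun a b => pcommute (P a) (P b)) i gs) [::]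
        (sort (fun i j => `|c j| <= `|c i|) (enum 'I_N)).

Definition si_num_groups (R : realType) (n N : nat) (c : 'I_N -> R)
    (P : 'I_N -> pauli n) : nat := size (sorted_insertion_seq c P).

Definition si_grouping (R : realType) (n N : nat) (c : 'I_N -> R)
    (P : 'I_N -> pauli n) : 'I_(si_num_groups c P) -> {set 'I_N} :=
  fun j => [set x in nth [::] (sorted_insertion_seq c P) j].
Arguments si_grouping {R n N} c P _.

(* Main.v *)
Require Import Defs.
From HB Require Import structures.
From mathcomp Require Import all_boot all_order all_algebra.
From mathcomp Require Import boolp classical_sets reals.
From mathcomp Require Import zify ring lra.
Set Implicit Arguments. Unset Strict Implicit. Unset Printing Implicit Defensive.
Import Order.TTheory GRing.Theory Num.Theory.
Section SI.
Variables (T : eqType) (comm : T -> T -> bool).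
Definition pr (p : T * T) : seq T := [:: p.1; p.2].

Lemma si_ins1 x qs : all (fun q => ~~ comm x q.2) qs ->
  si_insert comm x (map pr qs) = rcons (map pr qs) [:: x].
Proof.
elim: qs => //= q qs IH /andP [h1 h2]; rewrite IH //.
by rewrite (negbTE h1) andbF.
Qed.

Lemma si_ins2 x y qs : all (fun q => ~~ comm y q.1) qs -> comm y x ->
  si_insert comm y (rcons (map pr qs) [:: x]) = map pr (rcons qs (x, y)).
Proof.
move=> + hyx; elim: qs => /= [|q qs IH /andP [h1 h2]]; first by rewrite hyx.
by rewrite IH // (negbTE h1).
Qed.

Definition si_rel (p q : T * T) := ~~ comm q.1 p.2 && ~~ comm q.2 p.1.

Lemma si_pairs qs ps : pairwise si_rel (qs ++ ps) ->
  all (fun p => comm p.2 p.1) ps ->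
  foldl (fun gs i => si_insert comm i gs) (map pr qs) (flatten (map pr ps))
  = map pr (qs ++ ps).
Proof.
elim: ps qs => [|[x y] ps IH] qs; first by rewrite cats0.
rewrite pairwise_cat => /and3P [hall hq hp] /= /andP [hc hcs].
rewrite si_ins1; last first.
  by apply/allP => q hq'; move: hall => /allP /(_ q hq') /= /andP [/andP [] ].
rewrite si_ins2 //; last first.
  by apply/allP => q hq'; move: hall => /allP /(_ q hq') /= /andP [/andP [] ].
rewrite IH ?cat_rcons //.
by rewrite pairwise_cat hall hq hp.
Qed.
End SI.
Definition pv (t k : nat) : nat :=
  if odd t then (if k == t./2 then 0 else 3) else (if k == t./2 then 1 else 0).

Lemma pv_lt t k : (pv t k < 4)%N.
Proof. by rewrite /pv; case: odd; case: eqP. Qed.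

Definition Pc (m : nat) : 'I_(m.*2) -> pauli m := fun t k => inord (pv t k).

Lemma Pval m (t : 'I_(m.*2)) k : (Pc t k : nat) = pv t k.
Proof. by rewrite /Pc inordK // pv_lt. Qed.

Lemma card_cond m (b : bool) (h : nat) : (h < m)%N ->
  #|[set k : 'I_m | b && (val k == h)]| = b.
Proof.
move=> hh; case: b.
  have -> : [set k : 'I_m | true && (val k == h)] = [set Ordinal hh].
    by apply/setP => k; rewrite !inE -val_eqE.
  by rewrite cards1.
have -> : [set k : 'I_m | false && (val k == h)] = finset.set0.
  by apply/setP => k; rewrite !inE.
by rewrite cards0.
Qed.

Lemma Pcomm m (t t' : 'I_(m.*2)) :
  pcommute (Pc t) (Pc t') = (odd t == odd t') || (t./2 == t'./2).
Proof.
rewrite /pcommute.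
have -> : [set k : 'I_m | [&& (Pc t k : nat) != 0%N, (Pc t' k : nat) != 0%N & Pc t k != Pc t' k]]
  = [set k : 'I_m | ((odd t != odd t') && (t./2 != t'./2)) &&
       (val k == (if odd t then t' else t)./2)].
  apply/setP => k; rewrite !inE -!val_eqE /= !Pval /pv.
  case: (odd t); case: (odd t'); case: (eqVneq (val k) t./2) => [->|h1];
  case: (eqVneq (val k) t'./2) => [e|h2] //=; rewrite ?e ?eqxx //=;
  try (by rewrite ?(negbTE h1) ?(negbTE h2)).
  all: try (case: (eqVneq t./2 t'./2) => E; rewrite ?E ?eqxx //=; lia).
rewrite card_cond; last by case: (odd t); [move: (ltn_ord t') | move: (ltn_ord t)]; lia.
by case: (odd t); case: (odd t'); case: (t./2 == t'./2).
Qed.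

Lemma half_lt m (t : 'I_(m.*2)) : (t./2 < m)%N.
Proof. by move: (ltn_ord t); lia. Qed.

Lemma Pc_inj m : injective (@Pc m).
Proof.
move=> t t' E.
have h1 := congr1 (fun f : pauli m => (f (Ordinal (half_lt t)) : nat)) E.
have h2 := congr1 (fun f : pauli m => (f (Ordinal (half_lt t')) : nat)) E.
rewrite /= !Pval /pv /= eqxx in h1 h2.
apply: val_inj => /=; rewrite -(odd_double_half t) -(odd_double_half t').
move: h1 h2; case: (odd t); case: (odd t');
case: (eqVneq t./2 t'./2) => [->|ne] //=; rewrite ?eqxx //;
have ne' := ne; rewrite eq_sym in ne'; rewrite (negbTE ne) (negbTE ne') //.
Qed.


Lemma lt_e m (l : 'I_m) : (l.*2 < m.*2)%N.
Proof. by move: (ltn_ord l); lia. Qed.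
Lemma lt_o m (l : 'I_m) : (l.*2.+1 < m.*2)%N.
Proof. by move: (ltn_ord l); lia. Qed.
Definition ee m (l : 'I_m) : 'I_(m.*2) := Ordinal (lt_e l).
Definition oo m (l : 'I_m) : 'I_(m.*2) := Ordinal (lt_o l).
Definition ps m := [seq (ee l, oo l) | l <- enum 'I_m].

Lemma ps_val m : [seq map val (pr p) | p <- ps m] = [seq [:: l.*2; l.*2.+1] | l <- iota 0 m].
Proof. by rewrite /ps -map_comp -val_enum_ord -map_comp. Qed.

Lemma flat_iota a k :
  flatten [seq [:: l.*2; l.*2.+1] | l <- iota a k] = iota a.*2 k.*2.
Proof. by elim: k a => // k IH a; rewrite /= IH doubleS. Qed.

Lemma enum_eq m : enum 'I_(m.*2) = flatten (map (@pr _) (ps m)).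
Proof.
apply: (inj_map val_inj); rewrite val_enum_ord map_flatten -map_comp.
by rewrite (ps_val m) flat_iota.
Qed.

Lemma ps_size m : size (map (@pr _) (ps m)) = m.
Proof. by rewrite size_map /ps size_map size_enum_ord. Qed.

Lemma ps_mem m (i : 'I_(m.*2)) (j : nat) : (j < m)%N ->
  (i \in nth [::] (map (@pr _) (ps m)) j) = (i./2 == j).
Proof.
move=> hj; rewrite -(mem_map val_inj) -(nth_map [::] [::]) ?ps_size //.
rewrite -map_comp ps_val (nth_map 0) ?size_iota // nth_iota // add0n !inE.
apply/idP/idP.
  by case/orP => /eqP ->; apply/eqP; lia.
move/eqP => h; have := odd_double_half i; rewrite h.
by case: odd => /= <-; rewrite eqxx ?orbT.
Qed.
Local Open Scope classical_set_scope.
Local Open Scope ring_scope.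
Section Gen.
Variables (R : realType) (N K : nat) (M : R) (c : 'I_N -> R) (G : 'I_K -> {set 'I_N}).
Hypothesis M0 : 0 < M.

Definition Vset := [set v : R | exists (Ms : 'I_K -> R) (w : 'I_N -> 'I_K -> R),
         admissible M G Ms w /\ v = model_variance c G Ms w].

Lemma var_ge0 Ms w : (forall j, 0 < Ms j) -> 0 <= model_variance c G Ms w.
Proof.
move=> hM; apply: sumr_ge0 => i _; apply: mulr_ge0; first exact: sqr_ge0.
by apply: sumr_ge0 => j _; apply: divr_ge0; [exact: sqr_ge0 | exact: ltW].
Qed.

Lemma Vset_ge0 v : Vset v -> 0 <= v.
Proof. by case=> Ms [w [[hM _] ->]]; exact: var_ge0. Qed.

Lemma opt_le v : Vset v -> var_opt M c G <= v.
Proof.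
move=> hv; apply: (ge_inf _ hv); exists 0 => y /Vset_ge0; exact.
Qed.

Lemma opt_ge b : Vset !=set0 -> (forall v, Vset v -> b <= v) -> b <= var_opt M c G.
Proof. by move=> ne hb; apply: lb_le_inf. Qed.

Lemma opt_ge0 : 0 <= var_opt M c G.
Proof.
have [ne|e] := pselect (Vset !=set0).
  by apply: opt_ge => // v /Vset_ge0.
have -> : var_opt M c G = inf Vset by [].
have -> : Vset = set0.
  by apply/seteqP; split => // v hv; apply: e; exists v.
by rewrite inf0.
Qed.


Lemma tangent (w x a : R) : 0 < x -> 2 * w * a - x * a ^+ 2 <= w ^+ 2 / x.
Proof.
move=> x0; rewrite -subr_ge0.
have -> : w ^+ 2 / x - (2 * w * a - x * a ^+ 2) = (w - x * a) ^+ 2 / x.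
  by field; rewrite gt_eqF.
by apply: divr_ge0; [exact: sqr_ge0 | exact: ltW].
Qed.

Lemma var_lb Ms w : admissible M G Ms w ->
  \sum_i c i ^+ 2 / M <= model_variance c G Ms w.
Proof.
case=> hM [hs hw]; rewrite /model_variance; apply: ler_sum => i _.
apply: ler_wpM2l; first exact: sqr_ge0.
have h1 : \sum_(j < K | i \in G j) (2 * w i j * M^-1 - Ms j * M^-1 ^+ 2)
   <= \sum_(j < K | i \in G j) (w i j ^+ 2 / Ms j).
  by apply: ler_sum => j _; apply: tangent.
apply: le_trans h1.
rewrite sumrB -mulr_suml -mulr_sumr -mulr_suml hw mulr1.
have hle : \sum_(j < K | i \in G j) Ms j <= M.
  rewrite -hs [X in _ <= X](bigID (fun j => i \in G j)) /= lerDl.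
  by apply: sumr_ge0 => j _; exact: ltW.
have : \sum_(j < K | i \in G j) Ms j * M^-1 ^+ 2 <= M * M^-1 ^+ 2.
  by rewrite -mulr_suml; apply: ler_wpM2r => //; exact: sqr_ge0.
have -> : M * M^-1 ^+ 2 = M^-1 by field; rewrite gt_eqF.
move=> h2; rewrite -mulr_suml in h2 *; lra.
Qed.

Lemma opt_lb : Vset !=set0 -> \sum_i c i ^+ 2 / M <= var_opt M c G.
Proof. by move=> ne; apply: opt_ge => // v [Ms [w [ha ->]]]; exact: var_lb. Qed.

Lemma opt_ub : (0 < K)%N -> (forall i, \sum_(j < K | i \in G j) (1:R) = 1) ->
  Vset (K%:R * \sum_i c i ^+ 2 / M).
Proof.
move=> K0 h1; have K0' : 0 < (K%:R : R) by rewrite ltr0n.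
exists (fun _ => M / K%:R), (fun _ _ => 1); split.
  split; first by move=> j; apply: divr_gt0.
  split; last by move=> i; rewrite h1.
  by rewrite sumr_const card_ord -[X in X = _]mulr_natr divfK // gt_eqF.
rewrite /model_variance mulr_sumr; apply: eq_bigr => i _.
rewrite (eq_bigr (fun j => 1 * (M / K%:R)^-1)); last by move=> j _; rewrite expr1n.
rewrite -mulr_suml h1 mul1r; field; rewrite !gt_eqF //.
Qed.

Lemma opt_lb2 (f : 'I_N -> 'I_K) (s : R) :
  (forall i j, (i \in G j) = (f i == j)) ->
  (forall j, \sum_(i | f i == j) c i ^+ 2 = s) -> 0 <= s -> Vset !=set0 ->
  s * (K%:R ^+ 2 / M) <= var_opt M c G.
Proof.
move=> hG hs s0 ne; apply: opt_ge => // v [Ms [w [[hM [hsum hw]] ->]]].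
rewrite /model_variance.
have e1 : forall i, \sum_(j < K | i \in G j) (w i j ^+ 2 / Ms j) = (Ms (f i))^-1.
  move=> i; have ePi : (fun j => i \in G j) =1 (fun j => j == f i).
    by move=> j; rewrite hG eq_sym.
  rewrite (eq_bigl _ _ ePi) big_pred1_eq.
  by have := hw i; rewrite (eq_bigl _ _ ePi) big_pred1_eq => ->; rewrite expr1n mul1r.
under eq_bigr do rewrite e1.
rewrite (partition_big f xpredT) //=.
have e2 : forall j, \sum_(i | true && (f i == j)) c i ^+ 2 / Ms (f i) = s / Ms j.
  move=> j; rewrite -(hs j) mulr_suml; apply: eq_big => // i /eqP -> //.
under eq_bigr do rewrite e2.
set a := K%:R / M.
have h1 : \sum_(j < K) s * (2 * 1 * a - Ms j * a ^+ 2) <= \sum_(j < K) s / Ms j.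
  apply: ler_sum => j _; apply: ler_wpM2l => //.
  by have := tangent 1 a (hM j); rewrite expr1n mul1r.
apply: le_trans h1; rewrite -mulr_sumr; apply: ler_wpM2l => //.
rewrite sumrB -!mulr_suml hsum sumr_const card_ord /a.
rewrite le_eqVlt; apply/orP; left; apply/eqP.
rewrite -mulr_natr; field; exact: lt0r_neq0.
Qed.

Lemma opt_empty : ~ (Vset !=set0) -> var_opt M c G = 0.
Proof.
move=> e; have -> : var_opt M c G = inf Vset by [].
have -> : Vset = set0.
  by apply/seteqP; split => // v hv; apply: e; exists v.
by rewrite inf0.
Qed.

Lemma uniq_mem (P : 'I_N -> pauli 0) : False -> True. Proof. by []. Qed.

End Gen.

Lemma grouping_ub (R : realType) n N (c : 'I_N -> R) (P : 'I_N -> pauli n) m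
   (G : 'I_m -> {set 'I_N}) M : 0 < M -> grouping P G ->
   var_opt M c G <= m%:R * (\sum_i c i ^+ 2 / M).
Proof.
move=> M0 [[_ cov] dis].
case: m G cov dis => [|m] G cov dis.
  rewrite opt_empty; first by rewrite mul0r.
  move=> -[v [Ms [w [[_ [hs _]] _]]]].
  by move: hs; rewrite big_ord0 => h; move: M0; rewrite -h ltxx.
apply: opt_le => //; apply: opt_ub => // i.
have [j0 hj0] := cov i.
have e : (fun j => i \in G j) =1 (fun j => j == j0).
  move=> j; case: (eqVneq j j0) => [->|ne] //.
  exact: (disjointFl (dis _ _ ne) hj0).
by rewrite (eq_bigl _ _ e) big_pred1_eq.
Qed.

Lemma part2 (R : realType) n N (c : 'I_N -> R) (P : 'I_N -> pauli n) m
   (G : 'I_m -> {set 'I_N}) mR (Rg : 'I_mR -> {set 'I_N}) M :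
   grouping P G -> 0 < M ->
   var_opt M c G / var_opt M c Rg <= 1 * m%:R.
Proof.
move=> hG M0; rewrite mul1r.
have hub := grouping_ub c M0 hG.
have L0 : 0 <= \sum_i c i ^+ 2 / M.
  by apply: sumr_ge0 => i _; apply: divr_ge0; [exact: sqr_ge0 | exact: ltW].
have [ne|e] := pselect (Vset M c Rg !=set0); last first.
  by rewrite (opt_empty e) invr0 mulr0.
have hlb := opt_lb M0 ne.
have [vp|] := ltP 0 (var_opt M c Rg); last first.
  move=> vle; have -> : var_opt M c Rg = 0.
    by apply/eqP; rewrite eq_le vle opt_ge0.
  by rewrite invr0 mulr0.
rewrite ler_pdivrMr //; apply: (le_trans hub); apply: ler_wpM2l => //.
Qed.

Lemma sorted_true (T : Type) (r : rel T) s : (forall x y, r x y) -> sorted r s.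
Proof.
move=> h; case: s => //= x s; elim: s x => //= y s IH x; rewrite h; exact: IH.
Qed.

Lemma si_eq (R : realType) m :
  sorted_insertion_seq (fun _ : 'I_(m.*2) => 1 : R) (@Pc m) = map (@pr _) (ps m).
Proof.
rewrite /sorted_insertion_seq sorted_sort; first last.
- by apply: sorted_true => ??; rewrite lexx.
- by move=> ???; rewrite lexx.
rewrite enum_eq; apply: (si_pairs (qs := [::])).
- rewrite /= /ps pairwise_map; apply: (@sub_pairwise _ (fun a b => a != b)).
    move=> l l' ne; rewrite /si_rel /= !Pcomm /=.
    by rewrite !odd_double !uphalf_double !doubleK /=; rewrite val_eqE eq_sym ne /=.
  by rewrite -uniq_pairwise enum_uniq.
- apply/allP => p /mapP [l _ ->] /=; rewrite Pcomm /=; apply/orP; right; apply/eqP; lia.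
Qed.

Lemma ratio_bounds (R : realType) (x L vS vR : R) : 0 < L -> 0 <= x ->
  vS = x * L -> L <= vR -> vR <= 2 * L -> 2^-1 * x <= vS / vR <= 1 * x.
Proof.
move=> L0 x0 -> h1 h2; have vR0 : 0 < vR by apply: lt_le_trans h1.
have a1 := ler_wpM2l x0 h1; have a2 := ler_wpM2l x0 h2.
apply/andP; split.
  by rewrite ler_pdivlMr //; nra.
by rewrite ler_pdivrMr //; nra.
Qed.

Lemma count2 (R : realType) m (j : nat) : (j < m)%N ->
  \sum_(i < m.*2 | i./2 == j) (1 : R) = 2.
Proof.
move=> hj; rewrite sumr_const.
have hj' : (j < m)%N := hj.
have -> : #|[pred i : 'I_(m.*2) | i./2 == j]| = 2%N.
  rewrite (@eq_card _ _ (ee (Ordinal hj) |: [set oo (Ordinal hj)])%SET).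
    by rewrite cards2 -val_eqE /=; case: eqP => //; lia.
  move=> i; rewrite !inE -!val_eqE /=.
  apply/idP/idP.
    move/eqP => h; have := odd_double_half i; rewrite h.
    by case: odd => /= <-; rewrite eqxx ?orbT.
  by case/orP => /eqP ->; apply/eqP; lia.
by [].
Qed.

Definition Rgrp m (j : 'I_2) : {set 'I_(m.*2)} := [set i : 'I_(m.*2) | odd i == (val j == 1%N)].

Lemma part1 (R : realType) (m : nat) : (2 <= m)%N ->
  let c := (fun _ : 'I_(m.*2) => 1 : R) in
  is_pauli_hamiltonian c (@Pc m) /\
  (forall i, 1 <= `|c i| <= 1) /\
  si_num_groups c (@Pc m) = m /\
  overlapped_grouping (@Pc m) (@Rgrp m) /\
  forall M : R, 0 < M ->
    2^-1 * m%:R <= var_opt M c (si_grouping c (@Pc m)) / var_opt M c (@Rgrp m)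
      <= 1 * m%:R.
Proof.
move=> m2 c.
have hK : si_num_groups c (@Pc m) = m by rewrite /si_num_groups si_eq ps_size.
split; first by split; [move=> i; exact: oner_neq0 | exact: Pc_inj].
split; first by move=> i; rewrite normr1 lexx.
split; first exact: hK.
split.
  split.
    move=> j; apply/forallP => i; apply/implyP; rewrite inE => hi.
    apply/forallP => i'; apply/implyP; rewrite inE => hi'.
    by rewrite Pcomm (eqP hi) (eqP hi') eqxx.
  move=> i; have hi : (odd i < 2)%N by case: odd.
  by exists (Ordinal hi); rewrite inE /=; case: odd.
move=> M M0.
set K := si_num_groups c (@Pc m).
have memS : forall i (j : 'I_K), (i \in si_grouping c (@Pc m) j) = (i./2 == val j).
  move=> i j; rewrite /si_grouping inE si_eq ps_mem //.
  by have := ltn_ord j; move: (val j) => v; rewrite /K hK.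
have L_eq : \sum_(i < m.*2) c i ^+ 2 / M = 2 * m%:R / M.
  rewrite /c (eq_bigr (fun _ => 1 / M)); last by move=> i _; rewrite expr1n.
  rewrite sumr_const card_ord -[1 / M *+ _]mulr_natr -muln2 natrM. by field; exact: lt0r_neq0.
have KR : (K%:R : R) = m%:R by rewrite /K hK.
have K0 : (0 < K)%N by rewrite /K hK; lia.
have hKi : forall i : 'I_(m.*2), (i./2 < K)%N.
  by move=> i; rewrite /K hK; move: (ltn_ord i); lia.
have jm : forall j : 'I_K, (val j < m)%N.
  by case=> v hv /=; move: hv; rewrite /K hK.
have h1S : forall i, \sum_(j < K | i \in si_grouping c (@Pc m) j) (1 : R) = 1.
  move=> i; rewrite (eq_bigl (fun j => j == Ordinal (hKi i))) ?big_pred1_eq // => j.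
  by rewrite memS -val_eqE /= eq_sym.
have ubS := opt_ub c M0 K0 h1S.
have vS_le := opt_le ubS.
have neS : Vset M c (si_grouping c (@Pc m)) !=set0 by exists (K%:R * \sum_i c i ^+ 2 / M).
pose fS := fun i => Ordinal (hKi i).
have memF : forall i j, (i \in si_grouping c (@Pc m) j) = (fS i == j).
  by move=> i j; rewrite memS -val_eqE.
have sumF : forall j, \sum_(i | fS i == j) c i ^+ 2 = 2.
  move=> j; rewrite (eq_bigl (fun i : 'I_(m.*2) => i./2 == val j)); last first.
    by move=> i; rewrite /= -val_eqE.
  rewrite (eq_bigr (fun _ => 1)); last by move=> i _; rewrite expr1n.
  exact: count2.
have vS_ge := opt_lb2 M0 memF sumF (ler0n _ 2) neS.
have h1R : forall i, \sum_(j < 2 | i \in Rgrp m j) (1 : R) = 1.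
  move=> i; rewrite big_mkcond !big_ord_recr big_ord0 /= !inE /=.
  by case: odd; rewrite ?add0r ?addr0.
have ubR := opt_ub c M0 (isT : (0 < 2)%N) h1R.
have lbR := opt_lb M0 (ex_intro _ _ ubR).
have vR_le := opt_le ubR.
rewrite L_eq in lbR vR_le vS_le.
rewrite KR in vS_le vS_ge.
apply: (ratio_bounds (L := 2 * m%:R / M)) => //.
- by apply: divr_gt0 => //; apply: mulr_gt0 => //; rewrite ltr0n; lia.
- apply/eqP; rewrite eq_le vS_le /=; apply: le_trans vS_ge.
  by rewrite le_eqVlt; apply/orP; left; apply/eqP; field; exact: lt0r_neq0.
Qed.

Theorem theorem1 (R : realType) :
  (* (i) a sequence of Hamiltonians with Theta(1) coefficients, sorted insertion
     giving m groups, and an overlapped grouping with variance ratio Theta(m) *)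
  (exists (a b k1 k2 : R) (m0 : nat), 0 < a /\ 0 < k1 /\
     forall m : nat, (m0 <= m)%N ->
       exists (n N : nat) (c : 'I_N -> R) (P : 'I_N -> pauli n)
              (mR : nat) (Rg : 'I_mR -> {set 'I_N}),
         is_pauli_hamiltonian c P /\
         (forall i, a <= `|c i| <= b) /\
         si_num_groups c P = m /\
         overlapped_grouping P Rg /\
         forall M : R, 0 < M ->
           k1 * m%:R <= var_opt M c (si_grouping c P) / var_opt M c Rg
             <= k2 * m%:R) /\
  (* (ii) the reduction is at most O(m) for every grouping with m groups *)
  (exists C : R, 0 < C /\
     forall (n N : nat) (c : 'I_N -> R) (P : 'I_N -> pauli n)
            (m : nat) (G : 'I_m -> {set 'I_N})
            (mR : nat) (Rg : 'I_mR -> {set 'I_N}) (M : R),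
       is_pauli_hamiltonian c P -> grouping P G -> overlapped_grouping P Rg ->
       0 < M ->
       var_opt M c G / var_opt M c Rg <= C * m%:R).
Proof.
split.
  exists 1, 1, 2^-1, 1, 2%N; split; first exact: ltr01.
  split; first by rewrite invr_gt0 ltr0n.
  move=> m hm; have [h1 [h2 [h3 [h4 h5]]]] := part1 R hm.
  exists m, m.*2, (fun _ => 1), (@Pc m), 2%N, (Rgrp m).
  by split; [exact: h1 | split; [exact: h2 | split; [exact: h3 | split; [exact: h4 | exact: h5]]]].
exists 1; split; first exact: ltr01.
move=> n N c P m G mR Rg M hP hG hR M0; exact: (part2 c Rg hG M0).
Qed.
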